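(* Let $\mathcal{F}$ be a $(G,[k_1,\dots,k_t],\lambda)$ Hadamard partitioned difference family. Then (i) $k_1+\cdots+k_t=2\lambda$; (ii) $k_1^2+\cdots+k_t^2=\lambda(2\lambda+1)$; (iii) $\lambda$ is even, hence $|G|\equiv 0 \pmod 4$.
   Context: $G$ is a finite group written additively, with difference $x-y:=x+(-y)$. For $B\subseteq G$, $\Delta B$ is the multiset $\{x-y: x,y\in B, x\neq y\}$; for $\mathcal{F}=\{B_1,\dots,B_t\}$, $\Delta\mathcal{F}$ is the multiset union of the $\Delta B_i$. $\mathcal{F}$ is a $(G,[k_1,\dots,k_t],\lambda)$ partitioned difference family (PDF) if the $B_i$ partition $G$, $|B_i|=k_i$, and $\Delta\mathcal{F}$ contains every non-zero element of $G$ exactly $\lambda$ times. It is Hadamard (HPDF) if $|G|=2\lambda$. *)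

(* Defs.v *)
From mathcomp Require Import all_boot all_order all_algebra.
Set Implicit Arguments. Unset Strict Implicit. Unset Printing Implicit Defensive.
Import GRing.Theory.
Local Open Scope ring_scope.

Definition diff_mult (G : finZmodType) (B : {set G}) (g : G) : nat :=
  #|[set p in setX B B | (p.1 != p.2) && (p.1 - p.2 == g)]|.

Definition is_PDF (G : finZmodType) (t : nat) (B : 'I_t -> {set G})
    (k : 'I_t -> nat) (lambda : nat) : Prop :=
  [/\ (forall i, B i != set0),
      (forall i j, i != j -> [disjoint B i & B j]),
      \bigcup_(i < t) B i = [set: G],
      (forall i, #|B i| = k i)
    & (forall g : G, g != 0 -> (\sum_(i < t) diff_mult (B i) g)%N = lambda)].

Definition is_HPDF (G : finZmodType) (t : nat) (B : 'I_t -> {set G})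
    (k : 'I_t -> nat) (lambda : nat) : Prop :=
  is_PDF B k lambda /\ #|G| = (2 * lambda)%N.

(* Main.v *)
Require Import Defs.
From mathcomp Require Import all_boot all_order all_algebra.
From mathcomp Require Import zify.

Lemma sum_diff_mult (G : finZmodType) (B : {set G}) :
  (\sum_(g : G | g != 0%R) diff_mult B g = #|B| * #|B| - #|B|)%N.
Proof.
have -> : (\sum_(g : G | g != 0%R) diff_mult B g =
           #|[set p in setX B B | p.1 != p.2]|)%N.
  rewrite -sum1_card (partition_big (fun p : G * G => (p.1 - p.2)%R) (fun g => g != 0%R)).
    apply: eq_bigr => g _; rewrite /diff_mult -sum1_card.
    by apply: eq_bigl => p; rewrite !inE andbA.
  by move=> p; rewrite inE => /andP[_]; rewrite GRing.subr_eq0.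
have HD : [set p in setX B B | p.1 == p.2] = (fun x => (x, x)) @: B.
  apply/setP => -[x y]; rewrite !inE /=; apply/idP/idP.
    by case/andP=> /andP[xB _] /eqP <-; apply/imsetP; exists x.
  by case/imsetP=> z zB [-> ->]; rewrite zB eqxx.
have Hc : #|(fun x : G => (x, x)) @: B| = #|B|.
  by apply: card_imset => a b [].
have := cardsID [set p | p.1 == p.2] (setX B B).
rewrite cardsX.
have -> : setX B B :&: [set p | p.1 == p.2] = [set p in setX B B | p.1 == p.2].
  by apply/setP => p; rewrite !inE.
have -> : setX B B :\: [set p | p.1 == p.2] = [set p in setX B B | p.1 != p.2].
  by apply/setP => p; rewrite !inE andbC.
rewrite HD Hc; lia.
Qed.

Lemma sum_card_part (G : finZmodType) (t : nat) (B : 'I_t -> {set G}) :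
  (forall i j, i != j -> [disjoint B i & B j]) ->
  \bigcup_(i < t) B i = [set: G] ->
  (\sum_(i < t) #|B i| = #|G|)%N.
Proof.
move=> Hdis Hcov.
rewrite -sum1_card.
have H1 : forall x : G, (\sum_(i < t) (x \in B i) = 1)%N.
  move=> x.
  have : x \in \bigcup_(i < t) B i by rewrite Hcov inE.
  case/bigcupP=> i0 _ xi0.
  rewrite (bigD1 i0) //= xi0 big1 // => j ji0.
  case: (boolP (x \in B j)) => // xj; exfalso.
  by rewrite (disjointFr (Hdis _ _ ji0) xj) in xi0.
rewrite (eq_bigr (fun x => \sum_(i < t) (x \in B i))%N); last by move=> x _; rewrite H1.
rewrite (exchange_big _ _ (index_enum 'I_t)) /=.
apply: eq_bigr => i _; rewrite -sum1_card.
rewrite big_mkcond [RHS]big_mkcond; apply: eq_bigr => x _ /=; by case: (x \in B i).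
Qed.

Theorem proposition3p1 (G : finZmodType) (t : nat) (B : 'I_t -> {set G})
    (k : 'I_t -> nat) (lambda : nat) :
  is_HPDF B k lambda ->
  [/\ (\sum_(i < t) k i)%N = (2 * lambda)%N,
      (\sum_(i < t) k i ^ 2)%N = (lambda * (2 * lambda + 1))%N,
      ~~ odd lambda
    & (#|G| %% 4 = 0)%N].
Proof.
case=> -[Hne Hdis Hcov Hk Hl] HG.
have S1 : (\sum_(i < t) k i)%N = (2 * lambda)%N.
  rewrite -HG -(@sum_card_part _ _ B Hdis Hcov); apply: eq_bigr => i _; by rewrite Hk.
have Hcnt : #|[pred g : G | g != 0%R]| = (2 * lambda - 1)%N.
  have := cardC1 (0%R : G); rewrite HG.
  have -> : #|predC1 (0%R : G)| = #|[pred g : G | g != 0%R]| by apply: eq_card.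
  lia.
have S0 : (\sum_(i < t) (k i * k i - k i) = (2 * lambda - 1) * lambda)%N.
  have : (\sum_(g : G | g != 0%R) \sum_(i < t) diff_mult (B i) g =
          \sum_(g : G | g != 0%R) lambda)%N.
    by apply: eq_bigr => g g0; rewrite Hl.
  rewrite sum_nat_const Hcnt exchange_big /= => <-.
  by apply: eq_bigr => i _; rewrite sum_diff_mult Hk.
have S2 : (\sum_(i < t) k i ^ 2)%N = (lambda * (2 * lambda + 1))%N.
  have : (\sum_(i < t) k i ^ 2 = \sum_(i < t) (k i * k i - k i) + \sum_(i < t) k i)%N.
    rewrite -big_split /=; apply: eq_bigr => i _.
    have : (k i <= k i * k i)%N by case: (k i) => // n; rewrite leq_pmull.
    nia.
  rewrite S0 S1 => ->.
  case: lambda {Hl HG S1 S0 Hcnt} => [|l] //; nia.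
have Hev : ~~ odd lambda.
  have : odd (\sum_(i < t) k i ^ 2) = odd (\sum_(i < t) k i).
    elim/big_rec2: _ => // i a b _ H.
    by rewrite !oddD oddX H.
  rewrite S1 S2 !(oddM, oddD) /=.
  by case: (odd lambda).
split => //.
rewrite HG; move: Hev; rewrite -dvdn2 => /dvdnP[m ->]; lia.
Qed.
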